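(* Run IPR with $\rho=4$ (and any $\alpha\in(0,1)$, $\epsilon\in(0,1)$). For each iteration $i$ of the while loop, let $b^{(i)}_{\min}$ be the minimum of $p(B)$ over all bags $B$ in the tentative assignment at the start of iteration $i$. Then at each iteration $i$ (such that iteration $i+1$ is executed), $b^{(i+1)}_{\min}\ge b^{(i)}_{\min}$.
   Context: Jobs $j\in[n]$ have processing times $p_j\ge0$; for a bag $B$, $p(B)=\sum_{j\in B}p_j$. There are $m$ machines with predicted speeds $\hat s_1\ge\dots\ge\hat s_m$; $opt(\mathbf p,\hat{\mathbf s})$ is the minimum makespan $\max_i(\text{load of } i)/\hat s_i$ of assigning jobs to machines with speeds $\hat{\mathbf s}$. Algorithm IPR. Input: $\hat{\mathbf s}$, $\mathbf p$, $\alpha$, accuracy $\epsilon\in(0,1)$, $\rho\ge1$. (1) Compute a partition $B_1,\dots,B_m$ with $p(B_1)\ge\dots\ge p(B_m)$ such that putting $B_i$ on machine $i$ has makespan at most $(1+\epsilon)opt(\mathbf p,\hat{\mathbf s})$ under speeds $\hat{\mathbf s}$. (2) Set $\overline{OPT}_C=\max_i p(B_i)/\hat s_i$ and tentative assignment $\mathcal M_i=\{B_i\}$. (3) While $\max\{p(B): B\in\cup_i\mathcal M_i, |B|\ge2\}>\rho\min\{p(B):B\in\cup_i\mathcal M_i\}$ (one execution of the loop body is an iteration): compute $\mathcal M'=$ LPT-Rebalance$(\mathcal M)$; if $\max_i\sum_{B\in\mathcal M'_i}p(B)/\hat s_i>(1+\alpha)\overline{OPT}_C$ return the current bags $\cup_i\mathcal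 M_i$; else $\mathcal M\leftarrow\mathcal M'$. (4) Return the bags $\cup_i\mathcal M_i$. LPT-Rebalance: let $B_{\min}$ be a bag of minimum $p(B)$ over all bags, $\mathcal M_{\min}$ its collection, $\mathcal M_{\max}$ a collection containing a bag of maximum $p(B)$ among bags with at least two jobs. Move $B_{\min}$ into $\mathcal M_{\max}$, let $\ell=|\mathcal M_{\max}|$, pool its jobs and redistribute them into $\ell$ new bags by LPT (jobs in non-increasing processing time, each into a currently least-loaded bag); these form the new $\mathcal M_{\max}$. *)

(* Defs.v *)
From HB Require Import structures.
From mathcomp Require Import all_boot all_order all_algebra.
Set Implicit Arguments. Unset Strict Implicit. Unset Printing Implicit Defensive.
Import Order.TTheory GRing.Theory Num.Theory.
Local Open Scope ring_scope.

Section IPR.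
Variables (R : realFieldType) (n m : nat).
Variable p : 'I_n -> R.
Variable s : 'I_m -> R.          (* predicted speeds *)

(* a bag is a list of (distinct) jobs *)
Definition pB (B : seq 'I_n) : R := \sum_(j <- B) p j.

Definition makespan_assign (f : {ffun 'I_n -> 'I_m}) : R :=
  \big[Num.max/0]_(i < m) ((\sum_(j | f j == i) p j) / s i).

Definition is_opt (v : R) : Prop :=
  (exists f, makespan_assign f = v) /\ (forall f, v <= makespan_assign f).

Definition OPTC (B : 'I_m -> seq 'I_n) : R :=
  \big[Num.max/0]_(i < m) (pB (B i) / s i).

Definition ipr_partition (eps : R) (B : 'I_m -> seq 'I_n) : Prop :=
  [/\ perm_eq (flatten [seq B i | i <- enum 'I_m]) (enum 'I_n),
      (forall i j : 'I_m, (i <= j)%N -> pB (B j) <= pB (B i)) &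
      exists opt, is_opt opt /\ OPTC B <= (1 + eps) * opt].

(* tentative assignment: a collection of bags for each machine *)
Definition state := 'I_m -> seq (seq 'I_n).

Definition allbags (M : state) : seq (seq 'I_n) := flatten [seq M i | i <- enum 'I_m].

(* b_min : minimum of p(B) over all bags (0 if there are no bags) *)
Definition minbag (M : state) : R :=
  \big[Num.min/pB (head [::] (allbags M))]_(B <- allbags M) pB B.

Definition loop_cond (rho : R) (M : state) : Prop :=
  exists2 B, B \in allbags M & (2 <= size B)%N /\ rho * minbag M < pB B.

Definition state_makespan (M : state) : R :=
  \big[Num.max/0]_(i < m) ((\sum_(B <- M i) pB B) / s i).

Inductive lpt_run : seq (seq 'I_n) -> seq 'I_n -> seq (seq 'I_n) -> Prop :=
| lpt_nil bs : lpt_run bs [::] bs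
| lpt_cons bs k j js res :
    (k < size bs)%N ->
    (forall k', (k' < size bs)%N -> pB (nth [::] bs k) <= pB (nth [::] bs k')) ->
    lpt_run (set_nth [::] bs k (rcons (nth [::] bs k) j)) js res ->
    lpt_run bs (j :: js) res.

(* LPT redistribution of [jobs] into l new bags (ties broken arbitrarily) *)
Definition lpt (l : nat) (jobs : seq 'I_n) (res : seq (seq 'I_n)) : Prop :=
  exists2 order, perm_eq order jobs &
    sorted (fun a b => p b <= p a) order /\ lpt_run (nseq l [::]) order res.

(* LPT-Rebalance (any admissible choice of B_min, M_max, LPT tie-breaking) *)
Definition rebalance (M M' : state) : Prop :=
  exists (i j : 'I_m) (Bmin Bx : seq 'I_n),
  [/\ Bmin \in M i,
      (forall B, B \in allbags M -> pB Bmin <= pB B),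
      Bx \in M j /\ (2 <= size Bx)%N,
      (forall B, B \in allbags M -> (2 <= size B)%N -> pB B <= pB Bx) &
      (let M1 := fun k => if k == i then rem Bmin (M i) else M k in
       let coll := Bmin :: M1 j in
       exists res, lpt (size coll) (flatten coll) res /\
         (forall k, M' k = if k == j then res else M1 k))].

(* M t = tentative assignment at the start of iteration t (t = 0..K);
   iterations 0..K-1 were executed and their rebalance was accepted *)
Definition ipr_trace (alpha rho : R) (B : 'I_m -> seq 'I_n) (M : nat -> state) (K : nat) : Prop :=
  (forall i, M 0%N i = [:: B i]) /\
  (forall t, (t < K)%N ->
     [/\ loop_cond rho (M t), rebalance (M t) (M t.+1) &
         state_makespan (M t.+1) <= (1 + alpha) * OPTC B]).

End IPR.

(* Main.v *)
Require Import Defs.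
From HB Require Import structures.
From mathcomp Require Import all_boot all_order all_algebra.
Import Order.TTheory GRing.Theory Num.Theory.
Set Implicit Arguments. Unset Strict Implicit.
Local Open Scope ring_scope.

Section Aux.
Variables (R : realFieldType) (n : nat) (p : 'I_n -> R).
Hypothesis hp : forall j, 0 <= p j.

Lemma pB_ge0 s : 0 <= pB p s.
Proof. by rewrite /pB; apply: sumr_ge0 => i _; apply: hp. Qed.

Lemma pB_cons x s : pB p (x :: s) = p x + pB p s.
Proof. by rewrite /pB big_cons. Qed.

Lemma pB_rcons s x : pB p (rcons s x) = pB p s + p x.
Proof. by rewrite /pB big_rcons. Qed.

Lemma pB_mem x s : x \in s -> p x <= pB p s.
Proof.
elim: s => [|y s IH] //; rewrite inE pB_cons => /orP [/eqP->|/IH h].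
  by rewrite lerDl pB_ge0.
by apply: (le_trans h); rewrite lerDr hp.
Qed.

Lemma mem_set_nth_inv (T : eqType) (x0 v x : T) (s : seq T) k :
  (k < size s)%N -> x \in set_nth x0 s k v -> x = v \/ x \in s.
Proof.
elim: s k => [|y s IH] [|k] //= hk; rewrite inE => /orP [/eqP->|h].
- by left.
- by right; rewrite inE h orbT.
- by right; rewrite inE eqxx.
- by case: (IH k hk h) => [->|h']; [left|right; rewrite inE h' orbT].
Qed.

Lemma mem_set_nth_new (T : eqType) (x0 v : T) (s : seq T) k :
  (k < size s)%N -> v \in set_nth x0 s k v.
Proof.
elim: s k => [|y s IH] [|k] //= hk; first by rewrite inE eqxx.
by rewrite inE IH ?orbT.
Qed.

Lemma mem_set_nth_old_UNUSED (T : eqType) (x0 v x : T) (s : seq T) k :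
  (k < size s)%N -> x \in s -> x != nth x0 s k -> x \in set_nth x0 s k v.
Proof.
elim: s k => [|y s IH] [|k] //= hk; rewrite !inE.
- by move=> /orP [/eqP->|h]; [rewrite eqxx|rewrite h orbT].
- by move=> /orP [->//|h] hne; rewrite IH ?orbT.
Qed.

Lemma perm_set_nth (s : seq (seq 'I_n)) k j :
  (k < size s)%N ->
  perm_eq (flatten (set_nth [::] s k (rcons (nth [::] s k) j))) (rcons (flatten s) j).
Proof.
elim: s k => [|y s IH] [|k] //= hk.
- by rewrite -!cats1 -!catA perm_cat2l perm_catC.
- by rewrite rcons_cat perm_cat2l; exact: IH.
Qed.

End Aux.

Section Run.
Variables (R : realFieldType) (n : nat) (p : 'I_n -> R).
Hypothesis hp : forall j, 0 <= p j.

Definition Inv (bs : seq (seq 'I_n)) :=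
  forall X, X \in bs -> (1 < size X)%N -> exists pre y,
    [/\ X = rcons pre y, pre != [::], p y <= pB p pre &
        forall C, C \in bs -> pB p pre <= pB p C].

Lemma run_inv bs js res : lpt_run p bs js res ->
  sorted (fun a b => p b <= p a) js ->
  (forall x y, x \in flatten bs -> y \in js -> p y <= p x) ->
  Inv bs ->
  [/\ Inv res, perm_eq (flatten res) (flatten bs ++ js) & size res = size bs].
Proof.
elim=> {bs js res} [bs|bs k j js res hk hmin _ IH] hs hxy hI.
  by split => //; rewrite cats0.
set bk := nth [::] bs k.
set bs' := set_nth [::] bs k (rcons bk j).
have hperm : perm_eq (flatten bs') (rcons (flatten bs) j) by exact: perm_set_nth.
have hsz : size bs' = size bs by rewrite size_set_nth; apply/maxn_idPr.
have hbk : bk \in bs by exact: mem_nth.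
have hmin' : forall C, C \in bs -> pB p bk <= pB p C.
  by move=> C hC; rewrite -(nth_index [::] hC); apply: hmin; rewrite index_mem.
have hmem : forall C, C \in bs' -> C = rcons bk j \/ C \in bs.
  by move=> C; apply: mem_set_nth_inv.
have hjs : forall y, y \in js -> p y <= p j.
  have tr : transitive (fun a b : 'I_n => p b <= p a).
    by move=> a b c h1 h2; exact: le_trans h2 h1.
  by move=> y hy; have /allP := order_path_min tr hs; move/(_ y hy).
have hbs'ge : forall C, C \in bs' -> pB p bk <= pB p C.
  move=> C /hmem [->|/hmin' //]; by rewrite pB_rcons lerDl hp.
have [I1 I2 I3] : [/\ Inv res, perm_eq (flatten res) (flatten bs' ++ js) & size res = size bs'].
  apply: IH.
  - exact: path_sorted hs.
  - move=> x y; rewrite (perm_mem hperm) mem_rcons inE => /orP [/eqP->|hx] hy.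
      exact: hjs.
    by apply: hxy => //; rewrite inE hy orbT.
  - move=> X /hmem [->|hX].
      rewrite size_rcons ltnS lt0n size_eq0 => hne.
      exists bk, j; split => //.
      have [x0 hx0] : exists x0, x0 \in bk.
        by case: (bk) hne => [|x s] //= _; exists x; rewrite mem_head.
      apply: (le_trans _ (pB_mem hp hx0)).
      apply: hxy; last by rewrite inE eqxx.
      by apply/flattenP; exists bk.
    move=> hsX; have [pre [y [e1 e2 e3 e4]]] := hI X hX hsX.
    exists pre, y; split => // C /hmem [->|hC]; last exact: e4.
    apply: (le_trans (e4 _ hbk)); rewrite pB_rcons lerDl hp //.
split => //; last by rewrite I3 hsz.
by rewrite (perm_trans I2) // -cat1s catA cats1 perm_cat2r.
Qed.

End Run.

From mathcomp Require Import lra.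

Lemma sum_mem (R : realFieldType) (T : eqType) (f : T -> R) x s :
  (forall y, 0 <= f y) -> x \in s -> f x <= \sum_(i <- s) f i.
Proof.
move=> hf; elim: s => [|y s IH] //; rewrite inE big_cons => /orP [/eqP->|/IH h].
  by rewrite lerDl sumr_ge0.
by apply: (le_trans h); rewrite lerDr hf.
Qed.

Lemma exists_min (R : realFieldType) (T : eqType) (f : T -> R) (s : seq T) :
  s != [::] -> exists2 x, x \in s & forall y, y \in s -> f x <= f y.
Proof.
elim: s => [|a s IH] // _; case: (eqVneq s [::]) => [->|/IH [x hx hmin]].
  by exists a; rewrite ?mem_head // => y; rewrite inE => /eqP->.
case: (leP (f a) (f x)) => h.
  exists a; first by rewrite mem_head.
  by move=> y; rewrite inE => /orP [/eqP->//|/hmin]; apply: le_trans.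
exists x; first by rewrite inE hx orbT.
by move=> y; rewrite inE => /orP [/eqP->|/hmin//]; apply: ltW.
Qed.

Section Core.
Variables (R : realFieldType) (n : nat) (p : 'I_n -> R).
Hypothesis hp : forall j, 0 <= p j.
Variable L : R.
Hypothesis hL : 0 <= L.

Definition sm x := if p x <= L then p x else 0.
Definition cb x : R := if L < p x then 1 else 0.
Definition SM (X : seq 'I_n) := \sum_(x <- X) sm x.
Definition CB (X : seq 'I_n) := \sum_(x <- X) cb x.

Lemma sm_ge0 x : 0 <= sm x. Proof. by rewrite /sm; case: ifP. Qed.
Lemma cb_ge0 x : 0 <= cb x. Proof. by rewrite /cb; case: ifP. Qed.
Lemma CB_ge0 X : 0 <= CB X. Proof. by apply: sumr_ge0 => *; apply: cb_ge0. Qed.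
Lemma SM_ge0 X : 0 <= SM X. Proof. by apply: sumr_ge0 => *; apply: sm_ge0. Qed.

Lemma all_small X : (forall x, x \in X -> p x <= L) -> SM X = pB p X /\ CB X = 0.
Proof.
move=> h; split.
  by apply: eq_big_seq => x /h hx; rewrite /sm hx.
by rewrite /CB big_seq big1 // => x /h hx; rewrite /cb ltNge hx /=.
Qed.

Lemma lower X W b : 0 <= b -> W <= 2 * b -> W <= pB p X -> W - 2 * b * CB X <= SM X.
Proof.
move=> hb hW1 hW2.
case: (boolP (has (fun x => L < p x) X)) => [/hasP [x hx hLx]|hn].
  have : cb x <= CB X by apply: sum_mem => //; apply: cb_ge0.
  rewrite /cb hLx => h1.
  have := SM_ge0 X; nra.
have [-> ->] : SM X = pB p X /\ CB X = 0.
  by apply: all_small => x hx; rewrite leNgt; apply: contra hn => h; apply/hasP; exists x.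
by rewrite mulr0 subr0.
Qed.

End Core.

Lemma sum_one_CB (R : realFieldType) (n : nat) (p : 'I_n -> R) L (l : seq (seq 'I_n)) :
  \sum_(X <- l) (1 - CB p L X) = (size l)%:R - \sum_(x <- flatten l) cb p L x.
Proof.
elim: l => [|a l IH]; first by rewrite !big_nil subr0.
have -> : flatten (a :: l) = a ++ flatten l by []. 
rewrite big_cons big_cat IH /= -add1n natrD /CB; lra.
Qed.

Lemma sum_rem (R : realFieldType) (T : eqType) (F : T -> R) x s :
  x \in s -> \sum_(y <- s) F y = F x + \sum_(y <- rem x s) F y.
Proof. by move=> h; rewrite (perm_big _ (perm_to_rem h)) big_cons. Qed.

Lemma core (R : realFieldType) (n : nat) (p : 'I_n -> R) Bmin rest res b :
  (forall j, 0 <= p j) ->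
  lpt p (size (Bmin :: rest)) (flatten (Bmin :: rest)) res ->
  0 <= b -> b <= pB p Bmin -> (forall C, C \in rest -> 2 * b <= pB p C) ->
  [/\ Inv p res, res != [::] & forall X, X \in res -> b <= pB p X].
Proof.
move=> hp [order hperm [hsort hrun]] hb hBmin hrest.
set l := size (Bmin :: rest).
have hfl : forall k, flatten (nseq k ([::] : seq 'I_n)) = [::] by elim=> //.
have hx0 : forall x y, x \in flatten (nseq l ([::] : seq 'I_n)) -> y \in order -> p y <= p x.
  by move=> x y; rewrite hfl.
have hI0 : Inv p (nseq l ([::] : seq 'I_n)).
  by move=> X; rewrite mem_nseq => /andP [_ /eqP->].
have [I1 I2 I3] := run_inv hp hrun hsort hx0 hI0.
rewrite hfl /= in I2; rewrite size_nseq in I3.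
have hP : perm_eq (flatten res) (flatten (Bmin :: rest)) by apply: perm_trans I2 hperm.
have hne : res != [::] by rewrite -size_eq0 I3.
split => //.
have [S hS hSmin] : exists2 S, S \in res & forall Y, Y \in res -> pB p S <= pB p Y.
  by apply: exists_min; rewrite -size_eq0 I3.
set L := pB p S.
have hL : 0 <= L by apply: pB_ge0.
suff : b <= L by move=> h X /hSmin; apply: le_trans.
have up : forall X, X \in res -> SM p L X <= 2 * L - 2 * L * CB p L X /\ CB p L X <= 1.
  move=> X hX.
  case: (ltnP 1 (size X)) => hsz.
    have [pre [y [e1 e2 e3 e4]]] := I1 X hX hsz.
    have hpre : pB p pre <= L by apply: e4.
    have [-> ->] : SM p L X = pB p X /\ CB p L X = 0.
      apply: all_small => x; rewrite e1 mem_rcons inE => /orP [/eqP->|hx].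
        exact: le_trans e3 hpre.
      exact: le_trans (pB_mem hp hx) hpre.
    by rewrite e1 pB_rcons; split; lra.
  case: X hX hsz => [|x [|y X']] // hX _.
    by rewrite /SM /CB !big_nil; split; lra.
  rewrite /SM /CB !big_seq1 /sm /cb.
  case: (leP (p x) L) => h1; case: (ltP L (p x)) => h2; split; lra.
have hSS : SM p L S = L /\ CB p L S = 0.
  by apply: all_small => x hx; apply: pB_mem.
have eSM : forall l0 : seq (seq 'I_n), \sum_(X <- l0) SM p L X = \sum_(x <- flatten l0) sm p L x.
  by move=> l0; rewrite big_flatten.
have eD : \sum_(X <- res) (1 - CB p L X) = \sum_(X <- Bmin :: rest) (1 - CB p L X).
  by rewrite !sum_one_CB I3 (perm_big _ hP).
set D := \sum_(X <- res) (1 - CB p L X).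
have hrem := perm_to_rem hS.
have hUp : \sum_(X <- res) SM p L X <= 2 * L * D - L.
  rewrite /D !(sum_rem _ hS).
  case: hSS => -> ->.
  have : \sum_(X <- rem S res) SM p L X <= \sum_(X <- rem S res) (2 * L * (1 - CB p L X)).
    rewrite [X in X <= _]big_seq [X in _ <= X]big_seq.
    apply: ler_sum => X /mem_rem hX; have [u _] := up X hX; lra.
  rewrite -mulr_sumr; lra.
have hD1 : 1 <= D.
  rewrite /D (sum_rem _ hS); case: hSS => _ ->.
  have : 0 <= \sum_(X <- rem S res) (1 - CB p L X).
    rewrite big_seq; apply: sumr_ge0 => X /mem_rem hX; have [_ u] := up X hX; lra.
  lra.
have hLo : 2 * b * D - b <= \sum_(X <- Bmin :: rest) SM p L X.
  rewrite /D eD !big_cons.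
  have h1 : b - 2 * b * CB p L Bmin <= SM p L Bmin by apply: lower => //; lra.
  have h2 : \sum_(X <- rest) (2 * b * (1 - CB p L X)) <= \sum_(X <- rest) SM p L X.
    rewrite big_seq [X in _ <= X]big_seq; apply: ler_sum => X hX.
    rewrite mulrBr mulr1; apply: lower => //; try lra; exact: hrest.
  rewrite -mulr_sumr in h2; lra.
have eS : \sum_(X <- Bmin :: rest) SM p L X = \sum_(X <- res) SM p L X.
  by rewrite !eSM (perm_big _ hP).
rewrite eS in hLo.
nra.
Qed.

Lemma big_min_le (R : realFieldType) (T : eqType) (F : T -> R) x0 s a :
  a \in s -> \big[Num.min/x0]_(i <- s) F i <= F a.
Proof.
elim: s => [|y s IH] //; rewrite inE => /orP [/eqP->|h]; rewrite big_cons ge_min.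
  by rewrite lexx.
by rewrite IH ?orbT.
Qed.

Lemma big_min_ge (R : realFieldType) (T : eqType) (F : T -> R) x0 s b :
  b <= x0 -> (forall i, i \in s -> b <= F i) -> b <= \big[Num.min/x0]_(i <- s) F i.
Proof.
move=> h0; elim: s => [|y s IH] h; first by rewrite big_nil.
rewrite big_cons le_min h /=; last by rewrite mem_head.
by apply: IH => i hi; apply: h; rewrite inE hi orbT.
Qed.

Section Main.
Variables (R : realFieldType) (n m : nat) (p : 'I_n -> R).
Hypothesis hp : forall j, 0 <= p j.

Definition G (M : state n m) := forall k X C, X \in M k -> C \in M k ->
  (1 < size X)%N -> pB p X <= 2 * pB p C.

Lemma allbagsP (M : state n m) B : reflect (exists k, B \in M k) (B \in allbags M).
Proof.
apply: (iffP flattenP) => [[s /mapP [k _ ->] h]|[k h]]; first by exists k.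
by exists (M k) => //; apply: map_f; rewrite mem_enum.
Qed.

Lemma minbag_le (M : state n m) B : B \in allbags M -> minbag p M <= pB p B.
Proof. by move=> h; apply: big_min_le. Qed.

Lemma minbag_ge (M : state n m) b : allbags M != [::] ->
  (forall B, B \in allbags M -> b <= pB p B) -> b <= minbag p M.
Proof.
move=> hne h; apply: big_min_ge; last by move=> i; apply: h.
by apply: h; case: (allbags M) hne => // a s _; rewrite mem_head.
Qed.

Lemma Inv_G res X C : Inv p res -> X \in res -> C \in res -> (1 < size X)%N ->
  pB p X <= 2 * pB p C.
Proof.
move=> hI hX hC hs; have [pre [y [-> _ e3 e4]]] := hI X hX hs.
rewrite pB_rcons; have := e4 C hC; lra.
Qed.

Lemma step (M M' : state n m) : G M -> loop_cond p 4 M -> rebalance p M M' ->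
  G M' /\ minbag p M <= minbag p M'.
Proof.
move=> hG [B' hB' [hsB' hlt]] [i [j [Bmin [Bx [hBi hmin [hBx hsz] hmax H]]]]].
move: H => /= [res [hlpt hM']].
set b := pB p Bmin.
have hb : 0 <= b by apply: pB_ge0.
have hBa : Bmin \in allbags M by apply/allbagsP; exists i.
have hm1 : minbag p M <= b by apply: minbag_le.
have hm2 : b <= minbag p M.
  by apply: minbag_ge => //; apply/eqP => e; rewrite e in hBa.
have h4 : 4 * b < pB p Bx.
  have := hmax B' hB' hsB'; lra.
have hM1 : forall k C, C \in (if k == i then rem Bmin (M i) else M k) -> C \in M k.
  by move=> k C; case: ifP => [/eqP->|_] //; apply: mem_rem.
have hrest : forall C, C \in (if j == i then rem Bmin (M i) else M j) -> 2 * b <= pB p C.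
  move=> C /hM1 hC; have := hG j Bx C hBx hC hsz; lra.
have [I1 I2 I3] := core hp hlpt hb (lexx _) hrest.
split.
  move=> k X C; rewrite hM'; case: ifP => _.
    by apply: Inv_G.
  by move=> hX hC; apply: (hG k X C (hM1 k X hX) (hM1 k C hC)).
apply: (le_trans hm1); apply: minbag_ge.
  case: res I2 hM' {I1 I3 hlpt} => // X res _ hM'.
  apply/eqP => e; have : X \in allbags M' by apply/allbagsP; exists j; rewrite hM' eqxx mem_head.
  by rewrite e.
move=> B /allbagsP [k]; rewrite hM'; case: ifP => _; first by apply: I3.
by move=> /hM1 hB; apply: hmin; apply/allbagsP; exists k.
Qed.

End Main.

Theorem lemma3 (R : realFieldType) (n m : nat) (p : 'I_n -> R) (s : 'I_m -> R)
  (alpha eps : R) (B : 'I_m -> seq 'I_n) (M : nat -> 'I_m -> seq (seq 'I_n)) (K : nat) :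
  (forall j, 0 <= p j) ->
  (forall i, 0 < s i) ->
  (forall i j : 'I_m, (i <= j)%N -> s j <= s i) ->
  0 < alpha < 1 -> 0 < eps < 1 ->
  ipr_partition p s eps B ->
  ipr_trace p s alpha 4 B M K ->
  forall t, (t < K)%N -> loop_cond p 4 (M t.+1) ->
    minbag p (M t) <= minbag p (M t.+1).
Proof.
move=> hp _ _ _ _ _ [h0 htr] t htK _.
have hG : forall t, (t <= K)%N -> G p (M t).
  elim=> [|t' IH] ht.
    move=> k X C; rewrite h0 !inE => /eqP-> /eqP-> _.
    have := pB_ge0 hp (B k); lra.
  have ht' : (t' < K)%N by [].
  have [hl hr _] := htr t' ht'.
  by case: (step hp (IH (ltnW ht')) hl hr).
have [hl hr _] := htr t htK.
by case: (step hp (hG t (ltnW htK)) hl hr).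
Qed.
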